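(* Let $S \subseteq \mathbb{R}^r$ be a linear subspace, $0 \le d \le r$, and $C(S,d)$ the associated s-cone. Let $x, x' \in C(S,d)$ be nonzero vectors which are not proportional. If $\operatorname{supp}(x') \subseteq \operatorname{supp}(x)$, then there exists a nonzero vector $x'' = x - \lambda x' \in C(S,d)$ with $\lambda \in \mathbb{R}$ such that $\operatorname{sign}(x'') \le \operatorname{sign}(x)$ and $\operatorname{supp}(x'') \subsetneq \operatorname{supp}(x)$. If moreover $\operatorname{sign}(x') \le \operatorname{sign}(x)$, then $\lambda > 0$ can be taken.
   Context: For $x \in \mathbb{R}^n$, $\operatorname{supp}(x) = \{ i \mid x_i \neq 0\}$, and $\operatorname{sign}(x) \in \{-,0,+\}^n$ is obtained by applying the sign function componentwise. The relations $0 < -$ and $0 < +$ induce a componentwise partial order on $\{-,0,+\}^n$ ($-$ and $+$ incomparable). For a linear subspace $S \subseteq \mathbb{R}^r$ and $0 \le d \le r$, the s-cone is $C(S,d) = \{ (x,y) \in \mathbb{R}^{(r-d)+d} \mid (x,y) \in S,\ y \ge 0\}$. *)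

(* Defs.v *)
From HB Require Import structures.
From mathcomp Require Import all_boot all_order all_algebra.
Set Implicit Arguments. Unset Strict Implicit. Unset Printing Implicit Defensive.
Import Order.TTheory GRing.Theory Num.Theory.
Local Open Scope ring_scope.

Section Defs.
Variable R : realFieldType.
Variable r : nat.

Definition supp (x : 'rV[R]_r) : {set 'I_r} := [set i | x 0 i != 0].

Inductive sgn := SNeg | SZero | SPos.
Definition sgn_of (a : R) : sgn :=
  if a == 0 then SZero else if 0 < a then SPos else SNeg.
Definition sgn_le (a b : sgn) : bool :=
  match a, b with
  | SZero, _ => true
  | SNeg, SNeg => true
  | SPos, SPos => true
  | _, _ => false
  end.
Definition sign_le (x y : 'rV[R]_r) : bool :=
  [forall i, sgn_le (sgn_of (x 0 i)) (sgn_of (y 0 i))].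

Definition scone (S : {vspace 'rV[R]_r}) (d : nat) : pred 'rV[R]_r :=
  [pred x | (x \in S) && [forall i : 'I_r, (r - d <= i)%N ==> (0 <= x 0 i)]].

Definition proportional (x y : 'rV[R]_r) : Prop :=
  exists c : R, x = c *: y \/ y = c *: x.
End Defs.

(* Main.v *)
Require Import Defs.
From HB Require Import structures.
From mathcomp Require Import all_boot all_order all_algebra ring lra.
Import Order.TTheory GRing.Theory Num.Theory.
Local Open Scope ring_scope.

Lemma sgn_le_refl (R : realFieldType) (a : R) : sgn_le (sgn_of a) (sgn_of a).
Proof. by rewrite /sgn_of; case: (a == 0) => //; case: (0 < a). Qed.

Lemma sgn_le_mul (R : realFieldType) (a b : R) :
  0 <= a * b -> (b = 0 -> a = 0) -> sgn_le (sgn_of a) (sgn_of b).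
Proof.
move=> hab hb; rewrite /sgn_of.
case: (a =P 0) => [//|/eqP a0].
have [b0|b0] := eqVneq b 0; first by rewrite (hb b0) eqxx in a0.
have [ha|ha] := ltP 0 a; have [hb'|hb'] := ltP 0 b => //.
- have : b < 0 by rewrite lt_neqAle b0 hb'.
  move=> bn; have := pmulr_rlt0 b ha; rewrite bn => /esym.
  by rewrite ltNge hab.
- have an : a < 0 by rewrite lt_neqAle a0 ha.
  have := nmulr_rlt0 b an; rewrite hb' => /esym.
  by rewrite ltNge hab.
Qed.

Lemma sgn_le_nonneg (R : realFieldType) (a b : R) :
  sgn_le (sgn_of a) (sgn_of b) -> 0 <= b -> 0 <= a.
Proof.
rewrite /sgn_of.
case: (a =P 0) => [a0 _ _|_]; first by rewrite a0.
case: (b =P 0) => [_|/eqP b0].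
  by case: (ltP 0 a) => [/ltW|].
case: (ltP 0 a) => [/ltW //|_].
case: (ltP 0 b) => // nb _ hb0.
by move: b0; rewrite eq_le nb hb0.
Qed.

Lemma sgn_le_div (R : realFieldType) (a b : R) :
  sgn_le (sgn_of a) (sgn_of b) -> a != 0 -> 0 < b / a.
Proof.
rewrite /sgn_of => h a0; move: h; rewrite (negbTE a0).
case: (b =P 0) => [_|/eqP b0]; first by case: ifP.
case: (ltP 0 a) => ha; case: (ltP 0 b) => hb //= _.
  by rewrite divr_gt0.
have an : a < 0 by rewrite lt_neqAle a0 ha.
have bn : b < 0 by rewrite lt_neqAle b0 hb.
by rewrite -mulrNN -invrN divr_gt0 // oppr_gt0.
Qed.

Theorem lemma1 (R : realFieldType) (r d : nat) (S : {vspace 'rV[R]_r})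
  (x x' : 'rV[R]_r) :
  (d <= r)%N ->
  x \in scone S d -> x' \in scone S d ->
  x != 0 -> x' != 0 -> ~ proportional x x' ->
  supp x' \subset supp x ->
  (exists lambda : R,
      let x'' := x - lambda *: x' in
      [/\ x'' != 0, x'' \in scone S d, sign_le x'' x & supp x'' \proper supp x])
  /\
  (sign_le x' x ->
   exists lambda : R, 0 < lambda /\
      let x'' := x - lambda *: x' in
      [/\ x'' != 0, x'' \in scone S d, sign_le x'' x & supp x'' \proper supp x]).
Proof.
move=> _ xC x'C _ x'0 nprop ssub.
have [j0 j0P] : exists j0, j0 \in supp x'.
  apply/existsP; apply: contraNT x'0 => /existsPn H.
  apply/eqP/rowP => j; rewrite mxE.
  by have := H j; rewrite inE negbK => /eqP.
set F := fun j => `|x 0 j / x' 0 j|.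
case: (arg_minP F j0P) => i iP Hmin.
set lam := x 0 i / x' 0 i.
have {}iP : i \in supp x' := iP.
have {}Hmin : forall j, j \in supp x' -> F i <= F j := Hmin.
have x'i : x' 0 i != 0 by move: iP; rewrite inE.
have sub_supp : forall j, x' 0 j != 0 -> x 0 j != 0.
  by move=> j hj; have := subsetP ssub j; rewrite !inE; apply.
have key : forall j, 0 <= (x - lam *: x') 0 j * x 0 j.
  move=> j; rewrite !mxE.
  have [hj|hj] := eqVneq (x' 0 j) 0.
    by rewrite hj mulr0 subr0 -expr2 sqr_ge0.
  have hm := Hmin j; rewrite inE hj in hm; have {}hm := hm isT.
  rewrite /F -/lam in hm.
  set rho := x 0 j / x' 0 j in hm.
  have xj : x 0 j = rho * x' 0 j by rewrite /rho divfK.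
  rewrite xj.
  have -> : (rho * x' 0 j - lam * x' 0 j) * (rho * x' 0 j)
            = (x' 0 j ^+ 2) * (rho * rho - lam * rho) by ring.
  apply: mulr_ge0; first exact: sqr_ge0.
  rewrite subr_ge0.
  apply: (le_trans (ler_norm _)); rewrite normrM.
  apply: (le_trans (ler_wpM2r (normr_ge0 rho) hm)).
  by rewrite -normrM ger0_norm // -expr2 sqr_ge0.
have zero : forall j, x 0 j = 0 -> (x - lam *: x') 0 j = 0.
  move=> j hj; rewrite !mxE hj.
  have [->|hj'] := eqVneq (x' 0 j) 0; first by rewrite mulr0 subr0.
  by have := sub_supp j hj'; rewrite hj eqxx.
have sle : sign_le (x - lam *: x') x.
  by apply/forallP => j; apply: sgn_le_mul; [exact: key | exact: zero].
have res : [/\ x - lam *: x' != 0, x - lam *: x' \in scone S d,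
             sign_le (x - lam *: x') x & supp (x - lam *: x') \proper supp x].
  split => //.
  - apply/negP => /eqP h; apply: nprop; exists lam; left.
    by apply/eqP; rewrite -subr_eq0 h.
  - move: xC x'C; rewrite !inE => /andP [xS /forallP xp] /andP [x'S _].
    rewrite memvB ?memvZ //=; apply/forallP => j; apply/implyP => hj.
    exact: sgn_le_nonneg (forallP sle j) (implyP (xp j) hj).
  - apply/properP; split.
      apply/subsetP => j; rewrite !inE; apply: contraNN => /eqP /zero ->.
      done.
    exists i; first by apply: (subsetP ssub).
    rewrite inE !mxE negbK /lam divfK //.
    by rewrite subrr.
split; first by exists lam.
move=> sle'; exists lam; split => //.
exact: sgn_le_div (forallP sle' i) x'i.
Qed.
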